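(* Let $\mathcal S$ be a chain-vanishing collection of nonempty subsets of a set $X$, and let $A,B\in\mathcal S$ with $A\perp B$. Then there is $C\in[A]_{\mathcal S}$ with $C\supseteq B$.
   Context: Fix a nonempty set $X$; $A^c:=X\setminus A$. $A\perp B$ means $A\cap B=\emptyset$ and $A\ne B^c$. For $A,B\in\mathcal S$, $B$ is $\mathcal S$-maximally orthogonal to $A$ if $B\perp A$ and no $C\in\mathcal S$ satisfies $C\perp A$, $C\supsetneq B$; $[A]_{\mathcal S}:=\{A\}\cup\{B\in\mathcal S:B$ is $\mathcal S$-maximally orthogonal to $A\}$. A chain is a sequence $(A_n)_{n\in\mathbb N}$ that is strictly increasing or strictly decreasing under inclusion; a decreasing (resp. increasing) chain is $\mathcal S$-vanishing if no $B\in\mathcal S$ satisfies $B\subseteq A_n$ (resp. $B\cap A_n=\emptyset$) for all $n$; $\mathcal S$ is chain-vanishing if every chain of members of $\mathcal S$ is $\mathcal S$-vanishing. *)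

(* Defs.v *)
(* Set equality is Leibniz equality (extensional under
   the whitelisted functional/propositional extensionality axioms). *)
From Stdlib Require Import Classical.

Definition set (X : Type) := X -> Prop.

Definition compl {X : Type} (A : set X) : set X := fun x => ~ A x.
Definition subset {X : Type} (A B : set X) : Prop := forall x, A x -> B x.
Definition psubset {X : Type} (A B : set X) : Prop := subset A B /\ ~ subset B A.
Definition disjoint {X : Type} (A B : set X) : Prop := forall x, ~ (A x /\ B x).

Definition orth {X : Type} (A B : set X) : Prop := disjoint A B /\ A <> compl B.

Definition max_orth {X : Type} (S : set X -> Prop) (A B : set X) : Prop :=
  orth B A /\ ~ (exists C, S C /\ orth C A /\ psubset B C).

Definition in_class {X : Type} (S : set X -> Prop) (A C : set X) : Prop :=
  C = A \/ (S C /\ max_orth S A C).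

Definition strictly_increasing {X : Type} (f : nat -> set X) : Prop :=
  forall n, psubset (f n) (f (S n)).
Definition strictly_decreasing {X : Type} (f : nat -> set X) : Prop :=
  forall n, psubset (f (S n)) (f n).

Definition dec_vanishing {X : Type} (S : set X -> Prop) (f : nat -> set X) : Prop :=
  ~ (exists B, S B /\ forall n, subset B (f n)).
Definition inc_vanishing {X : Type} (S : set X -> Prop) (f : nat -> set X) : Prop :=
  ~ (exists B, S B /\ forall n, disjoint B (f n)).

Definition chain_vanishing {X : Type} (S : set X -> Prop) : Prop :=
  forall f : nat -> set X, (forall n, S (f n)) ->
    (strictly_decreasing f -> dec_vanishing S f) /\
    (strictly_increasing f -> inc_vanishing S f).

(* Main.v *)
Require Import Defs.
From Stdlib Require Import Classical ClassicalEpsilon FunctionalExtensionality PropExtensionality.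

Lemma orth_sym {X : Type} (A B : set X) : orth A B -> orth B A.
Proof.
  intros [Hd Hn]. split.
  - intros x [h1 h2]. exact (Hd x (conj h2 h1)).
  - intros E. apply Hn. subst B. apply functional_extensionality. intro x.
    apply propositional_extensionality. unfold compl. split.
    + intros h h'. exact (h' h).
    + intros h. apply NNPP. exact h.
Qed.

Theorem mainTheorem11 (X : Type) (HX : inhabited X) (S : set X -> Prop)
  (Hne : forall A, S A -> exists x, A x)
  (Hcv : chain_vanishing S)
  (A B : set X) (HA : S A) (HB : S B) (HAB : orth A B) :
  exists C, in_class S A C /\ subset B C.
Proof.
  apply NNPP. intro H.
  set (P := fun D : set X => S D /\ orth D A /\ subset B D).
  assert (step : forall d : {D | P D}, {E | P E /\ psubset (proj1_sig d) E}).
  { intros [D [HS [Ho Hs]]]. apply constructive_indefinite_description. simpl.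
    apply NNPP. intro Hno. apply H. exists D. split; [|exact Hs].
    right. split; [exact HS|]. split; [exact Ho|].
    intros [C [HC1 [HC2 HC3]]]. apply Hno. exists C.
    split; [split; [exact HC1| split; [exact HC2|]]|exact HC3].
    intros x hx. apply (proj1 HC3). apply Hs. exact hx. }
  assert (P0 : P B).
  { split; [exact HB|split; [apply orth_sym; exact HAB| intros x h; exact h]]. }
  set (g := fun d : {D | P D} => exist P (proj1_sig (step d)) (proj1 (proj2_sig (step d)))).
  set (seqd := fix s (n : nat) : {D | P D} := match n with O => exist P B P0 | Datatypes.S m => g (s m) end).
  set (f := fun n => proj1_sig (seqd n)).
  destruct (Hcv f) as [_ Hinc].
  - intro n. unfold f. exact (proj1 (proj2_sig (seqd n))).
  - apply Hinc.
    + intro n. unfold f. simpl. exact (proj2 (proj2_sig (step (seqd n)))).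
    + exists A. split; [exact HA|]. intro n. unfold f.
      destruct (proj2_sig (seqd n)) as [_ [[Hd _] _]].
      intros x [h1 h2]. exact (Hd x (conj h2 h1)).
Qed.
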